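(* Let $\mathcal X$ be a real normed space and $\mathcal Y$ a normed space. Suppose that $c:\mathcal X\to\mathcal Y$ is an orthogonally constant mapping. Then there is a mapping $g:\mathbb R\to\mathcal Y$ such that $c(x)=g(\|x\|)$ for each $x\in\mathcal X$.
   Context: For $x,y$ in a real normed space $\mathcal X$, isosceles orthogonality is defined by $x\perp y$ if and only if $\|x+y\|=\|x-y\|$. A mapping $c:\mathcal X\to\mathcal Y$ is called orthogonally constant if $c(x+y)=c(x-y)$ for all $x,y\in\mathcal X$ with $x\perp y$. *)

(* Defs.v *)
From HB Require Import structures.
From mathcomp Require Import all_boot all_order all_algebra.
From mathcomp Require Import all_classical all_reals all_analysis.
Import Order.TTheory GRing.Theory Num.Theory.
Import numFieldNormedType.Exports.
Local Open Scope ring_scope.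

Definition iso_orth {R : realType} {X : normedModType R} (x y : X) : Prop :=
  `|x + y| = `|x - y|.

Definition orth_const {R : realType} {X : normedModType R} {T : Type}
  (c : X -> T) : Prop :=
  forall x y : X, iso_orth x y -> c (x + y) = c (x - y).

(* Main.v *)
Require Import Defs.
From HB Require Import structures.
From mathcomp Require Import all_boot all_order all_algebra.
From mathcomp Require Import all_classical all_reals all_analysis.
From mathcomp Require Import ring.
Import Order.TTheory GRing.Theory Num.Theory.
Import numFieldNormedType.Exports.
Local Open Scope ring_scope.

Lemma same_norm (R : realType) (X Y : normedModType R) (c : X -> Y) :
  orth_const c -> forall x y : X, `|x| = `|y| -> c x = c y.
Proof.
move=> H x y hxy.
pose u : X := 2^-1 *: (x + y).
pose v : X := 2^-1 *: (x - y).
have h2 : forall z : X, 2^-1 *: (z + z) = z.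
  move=> z; rewrite scalerDr -scalerDl.
  have -> : (2^-1 + 2^-1 : R) = 1 by field.
  by rewrite scale1r.
have ex : u + v = x.
  by rewrite /u /v -scalerDr addrACA subrr addr0 h2.
have ey : u - v = y.
  by rewrite /u /v -scalerBr opprB addrC addrA subrK h2.
clearbody u v.
have := H u v; rewrite /iso_orth ex ey; apply; exact: hxy.
Qed.

Theorem proposition2p3 (R : realType) (X Y : normedModType R) (c : X -> Y) :
  orth_const c -> exists g : R -> Y, forall x : X, c x = g `|x|.
Proof.
move=> H.
exists (fun r => c (xget 0 [set z : X | `|z| = r])).
move=> x; apply: same_norm => //.
symmetry; exact: (@xgetI _ 0 [set z : X | `|z| = `|x|] x).
Qed.
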